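(* Let $\mathfrak{G}$ be any graph with maximum degree $\mathfrak{d}\ge2$. Given any node $a$ of $\mathfrak{G}$ and any weight $w\in\mathbb{Z}_{>0}$, the number of connected clusters $\mathbf{W}$ with $a\in\mathbf{W}$ and $|\mathbf{W}|=w$ is at most $e\mathfrak{d}(1+e(\mathfrak{d}-1))^{w-1}$. If $\mathfrak{d}=1$, the number is at most $w$.
   Context: A cluster on a graph $\mathfrak{G}$ is a finite multiset of vertices, i.e. a finitely supported function $\mu$ from vertices to $\mathbb{Z}_{\ge0}$; its total weight is $|\mathbf{W}|=\sum_v\mu(v)$, its support is $\{v:\mu(v)\ge1\}$, and $a\in\mathbf{W}$ means $\mu(a)\ge1$. A cluster is connected if the subgraph of $\mathfrak{G}$ induced on its support is connected. *)

(* Defs.v *)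
(* A graph is a (possibly infinite) vertex type V with a
   symmetric irreflexive adjacency relation. *)
From Stdlib Require Export Reals List Relations.
Export ListNotations.

Definition has_degree {V : Type} (adj : V -> V -> Prop) (v : V) (k : nat) : Prop :=
  exists l : list V, NoDup l /\ (forall u, In u l <-> adj v u) /\ length l = k.

Definition max_degree {V : Type} (adj : V -> V -> Prop) (d : nat) : Prop :=
  (forall v, exists k, (k <= d)%nat /\ has_degree adj v k) /\
  (exists v, has_degree adj v d).

(* a cluster is a function mu : V -> nat; finite support and total weight w:
   its support is a finite duplicate-free list s and the sum of mu over s is w *)
Definition cluster_weight {V : Type} (mu : V -> nat) (w : nat) : Prop :=
  exists s : list V, NoDup s /\ (forall v, In v s <-> (0 < mu v)%nat) /\
    list_sum (map mu s) = w.

Definition induced_edge {V : Type} (adj : V -> V -> Prop) (mu : V -> nat) (x y : V) : Prop :=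
  adj x y /\ (0 < mu x)%nat /\ (0 < mu y)%nat.

Definition cluster_connected {V : Type} (adj : V -> V -> Prop) (mu : V -> nat) : Prop :=
  forall u v, (0 < mu u)%nat -> (0 < mu v)%nat ->
    clos_refl_trans V (induced_edge adj mu) u v.

Definition pairwise_distinct {V : Type} (L : list (V -> nat)) : Prop :=
  ForallOrdPairs (fun f g => exists v, f v <> g v) L.

(* Main.v *)
Require Import Defs.
From Stdlib Require Import Reals List Relations Lra Lia ClassicalEpsilon FunctionalExtensionality Classical.
Open Scope R_scope.

Definition sumR (l : list R) : R := fold_right Rplus 0 l.

Lemma sumR_app : forall l1 l2, sumR (l1 ++ l2) = sumR l1 + sumR l2.
Proof. induction l1; intros; simpl; [lra| rewrite IHl1; lra]. Qed.

Definition bnd {X : Type} (P : X -> Prop) (c : R) : Prop :=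
  forall L, NoDup L -> (forall x, In x L -> P x) -> INR (length L) <= c.

Lemma bounded_weaken {X} (P P0 : X -> Prop) c :
  (forall x, P x -> P0 x) -> bnd P0 c -> bnd P c.
Proof. intros H B L HL HP. apply B; auto. Qed.

Lemma bounded_mono {X} (P : X -> Prop) c c' : c <= c' -> bnd P c -> bnd P c'.
Proof. intros H B L HL HP. specialize (B L HL HP). lra. Qed.

Definition decb (P : Prop) : bool :=
  if excluded_middle_informative P then true else false.

Lemma decb_true P : decb P = true <-> P.
Proof. unfold decb; destruct (excluded_middle_informative P); split; intros; auto; discriminate. Qed.

Lemma bounded_split {X Y : Type} (P : X -> Prop) (Q : Y -> X -> Prop) (I : list Y) (c : Y -> R) :
  (forall x, P x -> exists i, In i I /\ Q i x) ->
  (forall i, In i I -> bnd (fun x => P x /\ Q i x) (c i)) ->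
  bnd P (sumR (map c I)).
Proof.
  revert P. induction I as [|i I IH]; intros P Hcov Hb L HL HP.
  - destruct L as [|x L]; simpl; [lra|].
    destruct (Hcov x (HP x (or_introl eq_refl))) as [j [[] _]].
  - simpl. rewrite <- (filter_length (fun x => decb (Q i x)) L).
    rewrite plus_INR.
    apply Rplus_le_compat.
    + apply (Hb i (or_introl eq_refl)). apply NoDup_filter; auto.
      intros x Hx. apply filter_In in Hx. destruct Hx as [Hx Hq].
      split; auto. apply decb_true; auto.
    + apply (IH (fun x => P x /\ ~ Q i x)).
      * intros x [Px Nq]. destruct (Hcov x Px) as [j [[<-|Hj] Hq]]; [contradiction|eauto].
      * intros j Hj. eapply bounded_weaken; [|apply (Hb j (or_intror Hj))].
        simpl. tauto.
      * apply NoDup_filter; auto.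
      * intros x Hx. apply filter_In in Hx. destruct Hx as [Hx Hq].
        split; auto. intro Hq'. apply decb_true in Hq'. rewrite Hq' in Hq. discriminate.
Qed.

Lemma NoDup_map_inj {X Y} (f : X -> Y) (P : X -> Prop) L :
  (forall x y, P x -> P y -> f x = f y -> x = y) -> (forall x, In x L -> P x) ->
  NoDup L -> NoDup (map f L).
Proof.
  intros Hi HP HL. induction HL as [|a l Ha Hl IH]; simpl; constructor.
  - intro Hin. apply in_map_iff in Hin. destruct Hin as [y [Hy Hyl]].
    assert (y = a) by (apply Hi; auto; [apply HP; simpl; auto|apply HP; simpl; auto]).
    subst; contradiction.
  - apply IH. intros; apply HP; simpl; auto.
Qed.

Lemma bounded_inj {X Y} (P : X -> Prop) (Q : Y -> Prop) (f : X -> Y) c :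
  (forall x, P x -> Q (f x)) -> (forall x y, P x -> P y -> f x = f y -> x = y) ->
  bnd Q c -> bnd P c.
Proof.
  intros HQ Hi B L HL HP. rewrite <- (length_map f L). apply B.
  - eapply NoDup_map_inj; eauto.
  - intros y Hy. apply in_map_iff in Hy. destruct Hy as [x [<- Hx]]. auto.
Qed.

Fixpoint subsets {A} (l : list A) : list (list A) :=
  match l with
  | [] => [[]]
  | x :: l' => subsets l' ++ map (cons x) (subsets l')
  end.

Lemma filter_in_subsets {A} (f : A -> bool) l : In (filter f l) (subsets l).
Proof.
  induction l; simpl; auto. apply in_or_app. destruct (f a).
  - right. apply in_map. auto.
  - left. auto.
Qed.

Lemma subsets_sub {A} (l S : list A) : In S (subsets l) -> NoDup l -> NoDup S /\ incl S l.
Proof.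
  revert S; induction l as [|x l IH]; simpl; intros S HS Hl.
  - destruct HS as [<-|[]]. split; [constructor| intros z []].
  - inversion Hl; subst. apply in_app_or in HS. destruct HS as [HS|HS].
    + destruct (IH S HS H2) as [N1 N2]. split; [exact N1| intros z Hz; right; apply N2; exact Hz].
    + apply in_map_iff in HS. destruct HS as [S' [<- HS']].
      destruct (IH S' HS' H2) as [N1 N2]. split.
      * constructor; auto.
      * intros z [<-|Hz]; [left; auto| right; apply N2; exact Hz].
Qed.

Fixpoint bsum (c : nat) (f : nat -> R) : R :=
  match c with
  | O => f O
  | S c => bsum c f + bsum c (fun j => f (S j))
  end.

Lemma bsum_ext c : forall f g, (forall j, f j = g j) -> bsum c f = bsum c g.
Proof. induction c; intros f g H; simpl; auto. rewrite (IHc f g), (IHc (fun j => f (S j)) (fun j => g (S j))); auto. Qed.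

Lemma sum_subsets {A} (l : list A) : forall f,
  sumR (map (fun S => f (length S)) (subsets l)) = bsum (length l) f.
Proof.
  induction l as [|x l IH]; intros f; simpl; [lra|].
  rewrite map_app, sumR_app, IH, map_map. simpl. rewrite (IH (fun j => f (S j))). reflexivity.
Qed.

Lemma bsum_pow g c : forall A, bsum c (fun j => A * g ^ j) = A * (1 + g) ^ c.
Proof.
  induction c; intros A; simpl; [ring|].
  rewrite IHc. rewrite (bsum_ext c _ (fun j => (A * g) * g ^ j)).
  - rewrite IHc. ring.
  - intros; simpl; ring.
Qed.

Lemma sumR_scal {X} (f : X -> R) A l : sumR (map (fun x => A * f x) l) = A * sumR (map f l).
Proof. induction l; simpl; [ring| rewrite IHl; ring]. Qed.

Lemma sumR_le {X} (f g : X -> R) l : (forall x, In x l -> f x <= g x) -> sumR (map f l) <= sumR (map g l).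
Proof. induction l; simpl; intros H; [lra|]. apply Rplus_le_compat; auto. Qed.

Lemma sumR_ext {X} (f g : X -> R) l : (forall x, In x l -> f x = g x) -> sumR (map f l) = sumR (map g l).
Proof. intros; f_equal; apply map_ext_in; auto. Qed.

Lemma geom b w : (b - 1) * sumR (map (fun k => b ^ k) (seq 0 w)) = b ^ w - 1.
Proof.
  induction w; [simpl; ring|].
  rewrite seq_S, map_app, sumR_app. simpl. rewrite Rmult_plus_distr_l, IHw. ring.
Qed.

Lemma sumR_const_le {X} (f : X -> R) M l : (forall x, In x l -> f x <= M) -> sumR (map f l) <= INR (length l) * M.
Proof. induction l; intros H; [simpl; lra|]. change (length (a::l)) with (S (length l)). rewrite S_INR.
  change (sumR (map f (a :: l))) with (f a + sumR (map f l)). specialize (IHl (fun x Hx => H x (or_intror Hx))). specialize (H a (or_introl eq_refl)). lra. Qed.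

Definition upd {V : Type} (mu : V -> nat) (r : V) : V -> nat :=
  fun v => if excluded_middle_informative (v = r) then 0%nat else mu v.

Definition wt {V : Type} (mu : V -> nat) (w : nat) : Prop :=
  exists s, NoDup s /\ (forall v, (0 < mu v)%nat -> In v s) /\ list_sum (map mu s) = w.

Definition Phi {V : Type} (adj : V -> V -> Prop) (R0 : list V) (F : V -> Prop) (w : nat) (mu : V -> nat) : Prop :=
  (forall v, F v -> mu v = 0%nat) /\ (forall r, In r R0 -> (1 <= mu r)%nat) /\ wt mu w /\
  (forall v, (0 < mu v)%nat -> exists r, In r R0 /\ clos_refl_trans V (induced_edge adj mu) v r).

Lemma upd_eq {V} (mu : V -> nat) r : upd mu r r = 0%nat.
Proof. unfold upd; destruct (excluded_middle_informative (r = r)); congruence. Qed.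

Lemma upd_neq {V} (mu : V -> nat) r v : v <> r -> upd mu r v = mu v.
Proof. unfold upd; destruct (excluded_middle_informative (v = r)); congruence. Qed.

Lemma sum_upd {V} (mu : V -> nat) r s : NoDup s -> In r s ->
  (list_sum (map (upd mu r) s) + mu r = list_sum (map mu s))%nat.
Proof.
  induction 1 as [|x s Hx Hs IH]; simpl; [tauto|]. intros [<-|Hr].
  - rewrite upd_eq. rewrite (map_ext_in (upd mu x) mu s). lia.
    intros v Hv. apply upd_neq. intro; subst; contradiction.
  - rewrite upd_neq by (intro; subst; contradiction). specialize (IH Hr). lia.
Qed.

Lemma le_list_sum {V} (mu : V -> nat) x s : In x s -> (mu x <= list_sum (map mu s))%nat.
Proof. induction s; simpl; [tauto|]. intros [<-|H]; [lia| specialize (IHs H); lia]. Qed.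

Lemma path_lemma {V} (adj : V -> V -> Prop) (sym : forall x y, adj x y -> adj y x)
  (mu : V -> nat) r R0 (F : V -> Prop) (HF : forall v, F v -> mu v = 0%nat)
  (C : list V) (HC : forall v, adj r v -> ~ In v (r :: R0) -> ~ F v -> In v C) :
  forall x y, clos_refl_trans_1n V (induced_edge adj mu) x y -> In y (r :: R0) ->
  (0 < mu x)%nat -> x <> r ->
  exists r', In r' (R0 ++ filter (fun v => Nat.ltb 0 (mu v)) C) /\
    clos_refl_trans V (induced_edge adj (upd mu r)) x r'.
Proof.
  induction 1 as [x|x z y Hxz Hzy IH]; intros Hy Hx Hxr.
  - exists x. split; [|apply rt_refl]. apply in_or_app; left.
    destruct Hy; [congruence|auto].
  - destruct (classic (In x R0)) as [HR|HR].
    { exists x; split; [apply in_or_app; left; auto| apply rt_refl]. }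
    destruct (classic (z = r)) as [Hz|Hz].
    + subst z. exists x. split; [|apply rt_refl]. apply in_or_app; right.
      apply filter_In. split.
      * apply HC. apply sym, Hxz. intros [H|H]; [congruence|contradiction].
        intro HFx. rewrite (HF x HFx) in Hx. lia.
      * apply Nat.ltb_lt; auto.
    + destruct Hxz as [Ha [Hmx Hmz]].
      destruct (IH Hy Hmz Hz) as [r' [Hr' Hp]].
      exists r'. split; auto. eapply rt_trans; [apply rt_step|exact Hp].
      split; auto. rewrite !upd_neq; auto.
Qed.

Lemma step {V : Type} (adj : V -> V -> Prop) (d : nat)
  (sym : forall x y, adj x y -> adj y x) (irr : forall x, ~ adj x x)
  (deg : forall v, exists k, (k <= d)%nat /\ has_degree adj v k)
  (r : V) (R0 : list V) (F : V -> Prop) (w : nat) (Hnd : NoDup (r :: R0)) :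
  exists C : list V, NoDup C /\ (forall v, In v C -> adj r v /\ ~ In v (r :: R0) /\ ~ F v) /\
    (exists N k, (k <= d)%nat /\ NoDup N /\ (forall u, In u N <-> adj r u) /\ length N = k) /\
    (forall v, In v C -> forall N, (forall u, In u N <-> adj r u) -> In v N) /\
    forall B : list V -> nat -> R,
      (forall S w', In S (subsets C) -> (w' < w)%nat ->
         bnd (Phi adj (R0 ++ S) (fun v => F v \/ v = r \/ (In v C /\ ~ In v S)) w') (B S w')) ->
      bnd (Phi adj (r :: R0) F w)
        (sumR (map (fun w' => sumR (map (fun S => B S w') (subsets C))) (seq 0 w))).
Proof.
  destruct (deg r) as [k [Hk [N [HN [HNa HNl]]]]].
  set (C := filter (fun v => decb (~ (In v (r :: R0) \/ F v))) N).
  assert (HCi : forall v, In v C <-> adj r v /\ ~ In v (r :: R0) /\ ~ F v).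
  { intros v. unfold C. rewrite filter_In, decb_true, HNa. tauto. }
  exists C. split; [apply NoDup_filter; auto|]. split; [intros v Hv; apply HCi; auto|].
  split; [exists N, k; auto|]. split.
  { intros v Hv N' HN'. apply HN'. apply HCi; auto. }
  intros B HB.
  apply (bounded_split _ (fun w' mu => (mu r + w')%nat = w)).
  { intros mu [HF [Hr [[s [Hs [Hss Hsum]]] Hc]]].
    exists (w - mu r)%nat. split.
    - apply in_seq. assert (1 <= mu r)%nat by (apply Hr; left; auto).
      assert (mu r <= w)%nat by (rewrite <- Hsum; apply le_list_sum; apply Hss; lia). lia.
    - assert (mu r <= w)%nat; [|lia].
      rewrite <- Hsum; apply le_list_sum; apply Hss. assert (1 <= mu r)%nat by (apply Hr; left; auto). lia. }
  intros w' Hw'. apply in_seq in Hw'.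
  apply (bounded_split _ (fun S mu => filter (fun v => Nat.ltb 0 (mu v)) C = S)).
  { intros mu _. exists (filter (fun v => Nat.ltb 0 (mu v)) C). split; auto. apply filter_in_subsets. }
  intros S HS.
  apply (bounded_inj _ (Phi adj (R0 ++ S) (fun v => F v \/ v = r \/ (In v C /\ ~ In v S)) w') (fun mu => upd mu r) _); [| |apply HB; auto; lia].
  - intros mu [[[HF [Hr [[s [Hs [Hss Hsum]]] Hc]]] Hmr] HSd].
    assert (Hr1 : (1 <= mu r)%nat) by (apply Hr; left; auto).
    inversion Hnd as [|? ? HrR0 HR0]; subst.
    split; [|split; [|split]].
    + intros v [Hv|[Hv|[HvC HvS]]].
      * destruct (classic (v = r)) as [->|Hne]; [apply upd_eq| rewrite upd_neq; auto].
      * subst; apply upd_eq.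
      * destruct (classic (v = r)) as [->|Hne]; [apply upd_eq| rewrite upd_neq; auto].
        destruct (Nat.eq_dec (mu v) 0) as [E|E]; auto. exfalso; apply HvS.
        apply filter_In; split; auto. apply Nat.ltb_lt; lia.
    + intros v Hv. apply in_app_or in Hv. destruct Hv as [Hv|Hv].
      * rewrite upd_neq by (intro; subst; contradiction). apply Hr; right; auto.
      * apply filter_In in Hv. destruct Hv as [HvC Hp]. apply Nat.ltb_lt in Hp.
        rewrite upd_neq; [lia|]. intro; subst. apply (irr r). apply HCi; auto.
    + exists s. split; auto. split.
      * intros v Hv. apply Hss. destruct (classic (v = r)) as [->|Hne].
        -- rewrite upd_eq in Hv; lia.
        -- rewrite upd_neq in Hv; auto.
      * assert (Hrs : In r s) by (apply Hss; lia).
        pose proof (sum_upd mu r s Hs Hrs). lia.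
    + intros v Hv. destruct (classic (v = r)) as [->|Hne]; [rewrite upd_eq in Hv; lia|].
      rewrite upd_neq in Hv by auto.
      destruct (Hc v Hv) as [r0 [Hr0 Hp]].
      apply clos_rt_rt1n in Hp.
      destruct (path_lemma adj sym mu r R0 F HF C (fun v a b c => proj2 (HCi v) (conj a (conj b c))) v r0 Hp Hr0 Hv Hne)
        as [r' [Hr' Hp']].
      exists r'. split; [|exact Hp']. first [exact Hr' | rewrite <- HSd; exact Hr'].
  - intros mu1 mu2 [[_ H1] _] [[_ H2] _] E.
    extensionality v. destruct (classic (v = r)) as [->|Hne]; [lia|].
    pose proof (equal_f E v) as Ev. simpl in Ev. rewrite !upd_neq in Ev; auto.
Qed.

Lemma len_le1 {X} (L : list X) x0 : NoDup L -> (forall x, In x L -> x = x0) -> (length L <= 1)%nat.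
Proof.
  intros HL H. destruct L as [|a [|b L]]; simpl; try lia.
  inversion HL as [|? ? Hn _]; subst. exfalso. apply Hn. rewrite (H a), (H b); simpl; auto.
Qed.

Lemma sum_zero {V} (mu : V -> nat) s : (forall v, mu v = 0%nat) -> list_sum (map mu s) = 0%nat.
Proof. intros H; induction s; simpl; auto. rewrite H, IHs; auto. Qed.

Lemma main {V : Type} (adj : V -> V -> Prop) (d : nat)
  (sym : forall x y, adj x y -> adj y x) (irr : forall x, ~ adj x x)
  (deg : forall v, exists k, (k <= d)%nat /\ has_degree adj v k)
  (G : nat -> nat -> R) (HG0 : 1 <= G 0%nat 0%nat) (HG0' : forall w, 0 <= G 0%nat w)
  (HGs : forall k c w, (c <= d - 1)%nat ->
     sumR (map (fun w' => bsum c (fun j => G (k + j)%nat w')) (seq 0 w)) <= G (S k) w) :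
  forall w R0 F, NoDup R0 -> (forall r, In r R0 -> exists u, F u /\ adj r u) ->
  bnd (Phi adj R0 F w) (G (length R0) w).
Proof.
  intro w. induction w as [w IH] using Wf_nat.lt_wf_ind.
  intros R0 F HR HRF. destruct R0 as [|r R0].
  - intros L HL HP. simpl.
    assert (Hz : forall mu, In mu L -> mu = (fun _ => 0%nat) /\ w = 0%nat).
    { intros mu Hmu. destruct (HP mu Hmu) as [_ [_ [[s [_ [_ Hs]]] Hc]]].
      assert (Z : forall v, mu v = 0%nat).
      { intros v. destruct (Nat.eq_dec (mu v) 0) as [E|E]; auto.
        destruct (Hc v ltac:(lia)) as [? [[] _]]. }
      split; [extensionality v; auto|]. rewrite <- Hs. apply sum_zero; auto. }
    destruct L as [|mu L]; [simpl; apply HG0'|].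
    destruct (Hz mu (or_introl eq_refl)) as [_ ->].
    pose proof (len_le1 (mu :: L) (fun _ => 0%nat) HL (fun x Hx => proj1 (Hz x Hx))).
    apply Rle_trans with (INR 1); [apply le_INR; exact H| simpl; exact HG0].
  - destruct (step adj d sym irr deg r R0 F w HR) as [C [HCnd [HCi [[N [k [Hk [HN [HNa HNl]]]]] [HCN Hstep]]]]].
    destruct (HRF r (or_introl eq_refl)) as [u [Fu Hru]].
    assert (HlC : (S (length C) <= d)%nat).
    { change (S (length C)) with (length (u :: C)). transitivity (length N); [|lia].
      apply NoDup_incl_length.
      - constructor; auto. intro HuC. apply (HCi u HuC). auto.
      - intros z [<-|Hz]; [apply HNa; auto| apply (HCN z Hz N HNa)]. }
    eapply bounded_mono; [|apply (Hstep (fun S w' => G (length (R0 ++ S)) w'))].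
    + simpl length.
      rewrite (sumR_ext _ (fun w' => bsum (length C) (fun j => G (length R0 + j)%nat w'))).
      * apply HGs. lia.
      * intros w' _. rewrite <- (sum_subsets C (fun j => G (length R0 + j)%nat w')).
        apply sumR_ext. intros S _. rewrite length_app. reflexivity.
    + intros S w' HS Hw'. apply IH; auto.
      * destruct (subsets_sub C S HS HCnd) as [HSn HSi].
        inversion HR; subst. apply NoDup_app; auto.
        intros a Ha HaS. apply (proj1 (proj2 (HCi a (HSi a HaS)))). right; auto.
      * intros z Hz. apply in_app_or in Hz. destruct Hz as [Hz|Hz].
        -- destruct (HRF z (or_intror Hz)) as [u' [Fu' Hu']]. exists u'. split; [left; exact Fu'| exact Hu'].
        -- exists r. split; [right; left; reflexivity|]. apply sym.
           destruct (subsets_sub C S HS HCnd) as [_ HSi]. apply (proj1 (HCi z (HSi z Hz))).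
Qed.

Lemma top {V : Type} (adj : V -> V -> Prop) (d : nat)
  (sym : forall x y, adj x y -> adj y x) (irr : forall x, ~ adj x x)
  (deg : forall v, exists k, (k <= d)%nat /\ has_degree adj v k)
  (G : nat -> nat -> R) (HG0 : 1 <= G 0%nat 0%nat) (HG0' : forall w, 0 <= G 0%nat w)
  (HGs : forall k c w, (c <= d - 1)%nat ->
     sumR (map (fun w' => bsum c (fun j => G (k + j)%nat w')) (seq 0 w)) <= G (S k) w)
  (a : V) (w : nat) (T : R)
  (Ht : forall c, (c <= d)%nat -> sumR (map (fun w' => bsum c (fun j => G j w')) (seq 0 w)) <= T) :
  bnd (Phi adj [a] (fun _ => False) w) T.
Proof.
  destruct (step adj d sym irr deg a [] (fun _ => False) w ltac:(repeat constructor; auto))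
    as [C [HCnd [HCi [[N [k [Hk [HN [HNa HNl]]]]] [HCN Hstep]]]]].
  assert (HlC : (length C <= d)%nat).
  { transitivity (length N); [|lia]. apply NoDup_incl_length; auto.
    intros z Hz; apply (HCN z Hz N HNa). }
  eapply bounded_mono; [|apply (Hstep (fun S w' => G (length S) w'))].
  + rewrite (sumR_ext _ (fun w' => bsum (length C) (fun j => G j w'))).
    * apply Ht. lia.
    * intros w' _. rewrite <- (sum_subsets C (fun j => G j w')). reflexivity.
  + intros S w' HS Hw'. simpl.
    apply (main adj d sym irr deg G HG0 HG0' HGs); auto.
    * destruct (subsets_sub C S HS HCnd) as [HSn HSi]; auto.
    * intros z Hz. exists a. split; [right; left; reflexivity|]. apply sym.
      destruct (subsets_sub C S HS HCnd) as [_ HSi]. apply (proj1 (HCi z (HSi z Hz))).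
Qed.

Lemma exp_case (d : nat) (g b E : R) (w : nat) (Hg : 0 < g) (Hb : 1 < b)
  (H1 : (1 + g) ^ (d - 1) <= g * (b - 1)) (H2 : (1 + g) ^ d * b <= E * (b - 1)) (Hw : (1 <= w)%nat) :
  let G := fun k w => g ^ k * b ^ w in
  1 <= G 0%nat 0%nat /\ (forall w, 0 <= G 0%nat w) /\
  (forall k c w, (c <= d - 1)%nat ->
     sumR (map (fun w' => bsum c (fun j => G (k + j)%nat w')) (seq 0 w)) <= G (S k) w) /\
  (forall c, (c <= d)%nat -> sumR (map (fun w' => bsum c (fun j => G j w')) (seq 0 w)) <= E * b ^ (w - 1)).
Proof.
  intros G. unfold G.
  assert (Hsum : forall c A w, sumR (map (fun w' => bsum c (fun j => g ^ (A + j) * b ^ w')) (seq 0 w))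
     = g ^ A * (1 + g) ^ c * sumR (map (fun w' => b ^ w') (seq 0 w))).
  { clear. intros c A w. rewrite <- sumR_scal. apply sumR_ext. intros w' _.
    rewrite (bsum_ext c _ (fun j => (g ^ A * b ^ w') * g ^ j)).
    - rewrite bsum_pow. ring.
    - intros j. rewrite pow_add. ring. }
  assert (Hgeo : forall w, 0 <= sumR (map (fun w' => b ^ w') (seq 0 w)) /\
      (b - 1) * sumR (map (fun w' => b ^ w') (seq 0 w)) = b ^ w - 1).
  { intros w0. split; [|apply geom]. induction w0; [simpl; lra|].
    rewrite seq_S, map_app, sumR_app. simpl. pose proof (pow_lt b w0). lra. }
  split; [simpl; lra|]. split; [intros; simpl; pose proof (pow_lt b w0); lra|]. split.
  - intros k c w0 Hc. rewrite Hsum.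
    destruct (Hgeo w0) as [Hs0 Hs1].
    set (Sg := sumR (map (fun w' => b ^ w') (seq 0 w0))) in *.
    assert (Hpc : (1 + g) ^ c <= (1 + g) ^ (d - 1)) by (apply Rle_pow; lia || lra).
    assert (HA : 0 < g ^ k) by (apply pow_lt; lra).
    assert (Hbw : 0 < b ^ w0) by (apply pow_lt; lra).
    replace (g ^ (k + 0)) with (g ^ k) by (rewrite Nat.add_0_r; auto).
    simpl. 
    apply Rle_trans with (g ^ k * (g * (b - 1)) * Sg).
    + apply Rmult_le_compat_r; auto. apply Rmult_le_compat_l; lra.
    + replace (g ^ k * (g * (b - 1)) * Sg) with (g * g ^ k * ((b - 1) * Sg)) by ring.
      rewrite Hs1. assert (0 < g * g ^ k) by (apply Rmult_lt_0_compat; lra). nra.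
  - intros c Hc. rewrite (sumR_ext _ (fun w' => (1 + g) ^ c * b ^ w')).
    2:{ intros w' _. rewrite (bsum_ext c _ (fun j => b ^ w' * g ^ j)).
        - rewrite bsum_pow. ring.
        - intros; ring. }
    rewrite sumR_scal. destruct (Hgeo w) as [Hs0 Hs1].
    set (Sg := sumR (map (fun w' => b ^ w') (seq 0 w))) in *.
    assert (Hpc : (1 + g) ^ c <= (1 + g) ^ d) by (apply Rle_pow; lia || lra).
    assert (Hpos : 0 < (1 + g) ^ c) by (apply pow_lt; lra).
    assert (Hbw : b ^ w = b * b ^ (w - 1)) by (destruct w; [lia|simpl; rewrite Nat.sub_0_r; ring]).
    assert (Hb1 : 0 < b ^ (w - 1)) by (apply pow_lt; lra).
    apply Rmult_le_reg_l with (b - 1); [lra|].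
    replace ((b - 1) * ((1 + g) ^ c * Sg)) with ((1 + g) ^ c * ((b - 1) * Sg)) by ring.
    rewrite Hs1, Hbw.
    apply Rle_trans with ((1 + g) ^ d * b * b ^ (w - 1)).
    + assert ((1 + g) ^ c * (b * b ^ (w - 1) - 1) <= (1 + g) ^ c * (b * b ^ (w - 1))) by nra.
      assert ((1 + g) ^ c * (b * b ^ (w - 1)) <= (1 + g) ^ d * (b * b ^ (w - 1))).
      { apply Rmult_le_compat_r; auto. pose proof (pow_lt b (w-1)); nra. }
      lra.
    + replace ((b - 1) * (E * b ^ (w - 1))) with ((E * (b - 1)) * b ^ (w - 1)) by ring.
      apply Rmult_le_compat_r; lra.
Qed.

Definition G1 (k w : nat) : R :=
  match k with
  | O => match w with O => 1 | _ => 0 end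
  | S k' => match w with O => 0 | _ => INR w ^ k' end
  end.

Lemma G1S k x : G1 (S k) (S x) = INR (S x) ^ k. Proof. reflexivity. Qed.
Lemma G1S0 k : G1 (S k) 0 = 0. Proof. reflexivity. Qed.

Lemma d1_case (w : nat) :
  1 <= G1 0%nat 0%nat /\ (forall w, 0 <= G1 0%nat w) /\
  (forall k c w, (c <= 1 - 1)%nat ->
     sumR (map (fun w' => bsum c (fun j => G1 (k + j)%nat w')) (seq 0 w)) <= G1 (S k) w) /\
  (forall c, (c <= 1)%nat -> sumR (map (fun w' => bsum c (fun j => G1 j w')) (seq 0 w)) <= INR w).
Proof.
  split; [simpl; lra|]. split; [intros [|w0]; simpl; lra|]. split.
  - intros k c w0 Hc. assert (c = 0%nat) by lia. subst c. simpl.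
    rewrite Nat.add_0_r. destruct k as [|k].
    + destruct w0 as [|n]; [simpl; lra|].
      change (seq 0 (S n)) with (0%nat :: seq 1 n). cbn [map]. unfold sumR; cbn [fold_right].
      fold (sumR (map (fun w' => G1 0 w') (seq 1 n))).
      assert (sumR (map (fun w' => G1 0 w') (seq 1 n)) <= INR (length (seq 1 n)) * 0).
      { apply sumR_const_le. intros x Hx. apply in_seq in Hx. destruct x; [lia|simpl; lra]. }
      simpl G1 at 1. simpl (G1 1 (S n)). lra.
    + destruct w0 as [|n]; [simpl; lra|].
      eapply Rle_trans; [apply (sumR_const_le _ (INR (S n) ^ k))|].
      * intros x Hx. apply in_seq in Hx. destruct x; [rewrite G1S0; apply pow_le; apply pos_INR|].
        rewrite G1S. apply pow_incr. split; [apply pos_INR| apply le_INR; lia].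
      * rewrite length_seq. change (G1 (S (S k)) (S n)) with (INR (S n) ^ S k). apply Req_le. rewrite <- tech_pow_Rmult. ring.
  - intros c Hc. eapply Rle_trans; [apply (sumR_const_le _ 1)|].
    + intros x _. destruct c as [|[|c]]; [| |lia]; simpl; destruct x; simpl; try lra.
      all: try (rewrite Rplus_0_l; simpl; lra).
    + rewrite length_seq. lra.
Qed.

Lemma exp_pow_n x n : exp x ^ n = exp (INR n * x).
Proof.
  induction n; simpl pow. rewrite Rmult_0_l, exp_0; reflexivity.
  rewrite IHn, S_INR, <- exp_plus. f_equal; ring.
Qed.

Lemma e_ge : 5/2 <= exp 1.
Proof.
  replace 1 with (INR 8 * (1/8)) by (simpl; lra).
  rewrite <- exp_pow_n. apply Rle_trans with ((1 + 1/8) ^ 8).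
  - simpl; lra.
  - apply pow_incr. split; [lra|apply exp_ineq1_le].
Qed.

Lemma pd_nodup {V} (L : list (V -> nat)) : pairwise_distinct L -> NoDup L.
Proof.
  induction 1 as [|a l Ha Hl IH]; constructor; auto.
  intro Hin. rewrite Forall_forall in Ha. destruct (Ha a Hin) as [v Hv]. auto.
Qed.

Theorem proposition3p6 :
  forall (V : Type) (adj : V -> V -> Prop) (d : nat),
    (forall x y, adj x y -> adj y x) ->
    (forall x, ~ adj x x) ->
    max_degree adj d ->
    forall (a : V) (w : nat), (0 < w)%nat ->
    forall L : list (V -> nat),
      pairwise_distinct L ->
      (forall mu, In mu L ->
         cluster_connected adj mu /\ (1 <= mu a)%nat /\ cluster_weight mu w) ->
      ((2 <= d)%nat ->
         INR (length L) <= exp 1 * INR d * (1 + exp 1 * (INR d - 1)) ^ (w - 1)) /\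
      (d = 1%nat -> (length L <= w)%nat).
Proof.
  intros V adj d sym irr [deg _] a w Hw L HL HLP.
  apply pd_nodup in HL.
  assert (HB : forall T, bnd (Phi adj [a] (fun _ => False) w) T -> INR (length L) <= T).
  { intros T B. apply B; auto. intros mu Hmu. destruct (HLP mu Hmu) as [Hc [Ha [s [Hs [Hss Hsum]]]]].
    split; [intros _ []|]. split; [intros r [<-|[]]; auto|]. split.
    - exists s. split; auto. split; auto. intros v; apply Hss.
    - intros v Hv. exists a. split; [left; auto|]. apply Hc; auto. }
  pose proof e_ge as He.
  split.
  - intros Hd. apply HB.
    destruct (Nat.eq_dec d 2) as [->|Hd3].
    + destruct (exp_case 2 (2/3) (1 + exp 1 * (INR 2 - 1)) (exp 1 * INR 2) w) as [A [B [C D]]];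
        try lia; simpl; try lra.
      * simpl. nra.
      * apply (top adj 2 sym irr deg _ A B C a w _ D).
    + assert (HD : 3 <= INR d) by (replace 3 with (INR 3) by (simpl; lra); apply le_INR; lia).
      set (t := INR d - 1) in *.
      assert (Ht : 2 <= t) by (unfold t; lra).
      set (g := 1 / t).
      assert (Hgt : g * t = 1) by (unfold g; field; lra).
      assert (Hg : 0 < g) by (unfold g; apply Rdiv_lt_0_compat; lra).
      assert (Hg2 : g <= 1/2) by (unfold g; apply Rmult_le_reg_r with t; [lra|]; field_simplify; lra).
      assert (H1 : (1 + g) ^ (d - 1) <= exp 1).
      { apply Rle_trans with (exp g ^ (d - 1)).
        - apply pow_incr. split; [lra| apply exp_ineq1_le].
        - rewrite exp_pow_n, minus_INR by lia. simpl (INR 1). fold t.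
          rewrite Rmult_comm, Hgt. lra. }
      destruct (exp_case d g (1 + exp 1 * t) (exp 1 * INR d) w) as [A [B [C D]]]; auto; try lia.
      * nra.
      * replace (g * (1 + exp 1 * t - 1)) with (exp 1 * (g * t)) by ring. rewrite Hgt. lra.
      * replace (INR d) with (t + 1) by (unfold t; ring).
        replace ((1 + g) ^ d) with ((1 + g) * (1 + g) ^ (d - 1))
          by (replace d with (S (d - 1)) at 2 by lia; reflexivity).
        assert (HP : 0 < (1 + g) ^ (d - 1)) by (apply pow_lt; lra).
        apply Rle_trans with ((1 + g) * exp 1 * (1 + exp 1 * t)).
        { apply Rmult_le_compat_r; [nra|]. apply Rmult_le_compat_l; lra. }
        assert (E1 : (1 + g) * (1 + exp 1 * t) = 1 + exp 1 * t + g + exp 1 * (g * t)) by ring.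
        rewrite Hgt in E1.
        replace ((1 + g) * exp 1 * (1 + exp 1 * t)) with (exp 1 * ((1 + g) * (1 + exp 1 * t))) by ring.
        rewrite E1.
        replace (exp 1 * (t + 1) * (1 + exp 1 * t - 1)) with (exp 1 * (exp 1 * t * t + exp 1 * t)) by ring.
        apply Rmult_le_compat_l; [lra|]. nra.
      * apply (top adj d sym irr deg _ A B C a w _ D).
  - intros ->.
    destruct (d1_case w) as [A [B [C D]]].
    apply INR_le. apply HB. apply (top adj 1 sym irr deg _ A B C a w _ D).
Qed.
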